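(* Let $G$ be a graph, let $m>1$ and let $k$ be a positive integer. Let $S\subseteq V(G)$ be such that there exists an $m$-matching from $S$ to $V(G)\setminus S$. If $G[V(G)\setminus S]$ is a $(k,m)$-expander, then $G$ is a $(k,(m-1)/2)$-expander.
   Context: An $m$-matching from $S$ to $T$ (disjoint vertex sets) is a subgraph $M$ of $G$ in which every $s\in S$ has exactly $m$ neighbors in $T$ and every vertex of $T$ has degree at most $1$. A graph $G$ is a $(k,d)$-expander if $|N_G(X)\setminus X|\ge d|X|$ for every $X\subseteq V(G)$ with $|X|\le k$, where $N_G(X)$ is the set of vertices adjacent to some vertex of $X$. *)

(* Defs.v *)
From mathcomp Require Import all_boot all_order all_algebra.
Set Implicit Arguments. Unset Strict Implicit. Unset Printing Implicit Defensive.
Import Order.TTheory GRing.Theory Num.Theory.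
Local Open Scope ring_scope.

Definition simple_graph (T : finType) (e : rel T) : Prop :=
  symmetric e /\ irreflexive e.

Definition nbhd (T : finType) (e : rel T) (X : {set T}) : {set T} :=
  [set y | [exists x in X, e x y]].

Definition m_matching (T : finType) (e : rel T) (m : nat) (S Tset : {set T}) : Prop :=
  [disjoint S & Tset] /\
  exists M : rel T,
    symmetric M /\ (forall x y, M x y -> e x y) /\
    (forall s, s \in S -> #|[set t in Tset | M s t]| = m) /\
    (forall t, t \in Tset -> #|[set u | M t u]| <= 1)%N.

(* The induced subgraph G[W] is a (k,d)-expander: for every X subset of W with
   |X| <= k, |N_{G[W]}(X) \ X| >= d |X|. Here N_{G[W]}(X) = N_G(X) cap W. *)
Definition induced_expander (T : finType) (e : rel T) (W : {set T}) (k : nat) (d : rat) : Prop :=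
  forall X : {set T}, X \subset W -> (#|X| <= k)%N ->
    d * (#|X|%:R) <= (#|(nbhd e X :&: W) :\: X|%:R : rat).

Definition expander (T : finType) (e : rel T) (k : nat) (d : rat) : Prop :=
  forall X : {set T}, (#|X| <= k)%N ->
    d * (#|X|%:R) <= (#|nbhd e X :\: X|%:R : rat).

(* Main.v *)
Require Import Defs.
From mathcomp Require Import all_boot all_order all_algebra.
From mathcomp Require Import zify ring lra.
Import Order.TTheory GRing.Theory Num.Theory.
Local Open Scope ring_scope.

Lemma match_card (T : finType) (M : rel T) (m : nat) (S W : {set T}) :
  symmetric M ->
  (forall s, s \in S -> #|[set t in W | M s t]| = m) ->
  (forall t, t \in W -> (#|[set u | M t u]| <= 1)%N) ->
  forall Y : {set T}, Y \subset S ->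
  #|[set t in W | [exists s in Y, M s t]]| = (m * #|Y|)%N.
Proof.
move=> Msym Hm H1 Y.
move Hn: #|Y| => n; elim: n Y Hn => [|n IH] Y Hn YS.
  move/eqP: Hn; rewrite cards_eq0 => /eqP ->; rewrite muln0.
  apply/eqP; rewrite cards_eq0; apply/eqP/setP => t; rewrite !inE.
  apply/negP => /andP[_ /existsP[s]]; by rewrite inE.
have: (0 < #|Y|)%N by rewrite Hn.
rewrite card_gt0 => /set0Pn[s sY].
have HY' : #|Y :\ s| = n.
  by move: Hn; rewrite (cardsD1 s Y) sY add1n => -[].
have Y'S : Y :\ s \subset S by apply: subset_trans YS; apply: subsetDl.
have sS : s \in S by apply: (subsetP YS).
have -> : [set t in W | [exists s0 in Y, M s0 t]] =
   [set t in W | M s t] :|: [set t in W | [exists s0 in Y :\ s, M s0 t]].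
  apply/setP => t; rewrite !inE; case: (t \in W) => //=.
  apply/existsP/idP.
    move=> [s0 /andP[s0Y Ms0]]; case: (eqVneq s0 s) => [<-|ne]; first by rewrite Ms0.
    apply/orP; right; apply/existsP; exists s0; by rewrite !inE ne s0Y.
  case/orP=> [Mst|/existsP[s0]]; first by exists s; rewrite sY.
  rewrite !inE => /andP[/andP[_ s0Y] Ms0]; by exists s0; rewrite s0Y.
rewrite cardsU Hm // IH // mulnS.
suff -> : [set t in W | M s t] :&: [set t in W | [exists s0 in Y :\ s, M s0 t]] = set0.
  by rewrite cards0 subn0.
apply/setP => t; rewrite !inE; apply/negP.
case/andP=> /andP[tW Mst] /andP[_ /existsP[s0]]; rewrite !inE.
case/andP=> /andP[ne _] Ms0.
have := H1 t tW; move/card_le1_eqP => Hle.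
have : s0 = s.
  apply: Hle; rewrite inE Msym //.
by move=> E; move: ne; rewrite E eqxx.
Qed.

Theorem lemma14 (T : finType) (e : rel T) (m k : nat) (S : {set T}) :
  simple_graph e -> (1 < m)%N -> (0 < k)%N ->
  m_matching e m S (~: S) ->
  induced_expander e (~: S) k (m%:R) ->
  expander e k ((m%:R - 1) / 2).
Proof.
move=> _ m1 _ [_ [M [Msym [Me [Hm H1]]]]] Hexp X Xk.
set X1 := X :&: S; set X2 := X :\: S.
set c := #|nbhd e X :\: X|.
have Hab : #|X| = (#|X1| + #|X2|)%N by rewrite cardsID.
have X2W : X2 \subset ~: S by apply/subsetP => x; rewrite !inE => /andP[].
have X2k : (#|X2| <= k)%N by apply: leq_trans Xk; apply: subset_leq_card; apply: subsetDl.
have Hb : (m * #|X2| <= c)%N.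
  have := Hexp X2 X2W X2k; rewrite -natrM ler_nat => H.
  apply: (leq_trans H); apply: subset_leq_card; apply/subsetP => y.
  move=> /setDP[/setIP[yN yW] nyX2]; apply/setDP; split.
    move: yN; rewrite /nbhd !inE => /existsP[x /andP[xX exy]].
    apply/existsP; exists x; rewrite exy andbT.
    by move: xX; rewrite /X2 in_setD => /andP[_ ->].
  apply/negP => yX; move: nyX2; rewrite /X2 in_setD yX andbT.
  by move: yW; rewrite in_setC => ->.
have X1S : X1 \subset S by apply: subsetIr.
have HP := @match_card T M m S (~: S) Msym Hm H1 X1 X1S.
set P := [set t in ~: S | [exists s in X1, M s t]] in HP.
have Ha : (m * #|X1| <= c + #|X2|)%N.
  rewrite -HP -(cardsID X2 P) addnC leq_add //; last first.
    by apply: subset_leq_card; apply: subsetIr.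
  apply: subset_leq_card; apply/subsetP => t; rewrite !inE.
  move=> /andP[nX2 /andP[tS /existsP[s /andP[sX1 Mst]]]].
  move: nX2 sX1; rewrite !inE tS /= => ntX /andP[sX _]; rewrite ntX /=.
  by apply/existsP; exists s; rewrite sX Me.
have Hfin : ((m - 1) * #|X| <= 2 * c)%N by rewrite Hab; nia.
have H : ((m - 1) * #|X|)%:R <= (2 * c)%:R :> rat by rewrite ler_nat.
rewrite natrM (natrB _ (ltnW m1)) natrM in H.
by rewrite mulrAC ler_pdivrMr // [_ * 2]mulrC.
Qed.
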